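(* Define $\tilde P$ on $\text{Ш}_e(A)\bar\otimes\text{Ш}_e(A)\bar\otimes\text{Ш}_e(A)$ by $$\tilde P(\mathfrak{a}\bar\otimes\mathfrak{b}\bar\otimes\mathfrak{c})=\big(P_e(\mathfrak{a})+\mu\mathfrak{a}\big)\bar\otimes\varepsilon_e(\mathfrak{b})1_A\bar\otimes\varepsilon_e(\mathfrak{c})1_A+\mathfrak{a}\bar\otimes\big(P_e(\mathfrak{b})+\mu\mathfrak{b}\big)\bar\otimes\varepsilon_e(\mathfrak{c})1_A+\mathfrak{a}\bar\otimes\mathfrak{b}\bar\otimes P_e(\mathfrak{c}).$$ Then $\tilde P$ is an extended Rota-Baxter operator of weight $(\lambda,\kappa)$ on $\text{Ш}_e(A)\bar\otimes\text{Ш}_e(A)\bar\otimes\text{Ш}_e(A)$. Furthermore, $(\mathrm{id}\otimes\Delta_e)\Delta_e$ and $(\Delta_e\otimes\mathrm{id})\Delta_e$ are extended Rota-Baxter algebra homomorphisms from $(\text{Ш}_e(A),P_e)$ to $(\text{Ш}_e(A)\bar\otimes\text{Ш}_e(A)\bar\otimes\text{Ш}_e(A),\tilde P)$.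
   Context: $\mathbf{k}$ is a commutative unitary ring, $\lambda,\kappa\in\mathbf{k}$, $\mu$ a root of $t^2-\lambda t+\kappa$. An extended Rota-Baxter operator of weight $(\lambda,\kappa)$ satisfies $P(x)P(y)=P(xP(y))+P(P(x)y)+\lambda P(xy)+\kappa xy$. $A=(A,m_A,\mu_A,\Delta_A,\varepsilon_A)$ is a commutative bialgebra and $(\text{Ш}_e(A),\diamond,P_e,j_A)$ is the free commutative extended Rota-Baxter algebra of weight $(\lambda,\kappa)$ on $A$, with $\text{Ш}_e(A)=\bigoplus_{n\ge1}A^{\otimes n}$ and $P_e(\mathfrak{a})=1_A\otimes\mathfrak{a}$. $\varepsilon_e:\text{Ш}_e(A)\to\mathbf{k}$ is the unique extended Rota-Baxter algebra homomorphism with $\varepsilon_e\circ j_A=\varepsilon_A$, $\varepsilon_e\circ P_e=-\mu\varepsilon_e$; $\Delta_e:\text{Ш}_e(A)\to\text{Ш}_e(A)\bar\otimes\text{Ш}_e(A)$ is the unique extended Rota-Baxter algebra homomorphism with $\Delta_e\circ j_A=\Delta_A$, $\Delta_e\circ P_e=\bar P\circ\Delta_e$, where $\bar P(\mathfrak{a}\bar\otimes\mathfrak{b})=P_e(\mathfrak{a})\bar\otimes\varepsilon_e(\mathfrak{b})1_A+\mu\mathfrak{a}\bar\otimes\varepsilon_e(\mathfrak{b})1_A+\mathfrak{a}\bar\otimes P_e(\mathfrak{b})$. $\bar\otimes$ denotes the tensor product between copies of $\text{Ш}_e(A)$, with componentwise multiplication. *)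

(* Defs.v *)
From HB Require Import structures.
From mathcomp Require Import all_boot all_algebra.
Set Implicit Arguments. Unset Strict Implicit. Unset Printing Implicit Defensive.
Import GRing.Theory.
Local Open Scope ring_scope.

Definition lin (R : comPzRingType) (U V : lmodType R) (f : U -> V) : Prop :=
  forall (a : R) (x y : U), f (a *: x + y) = a *: f x + f y.

Definition is_tensor2 (R : comPzRingType) (U V W : lmodType R) (t : U -> V -> W) : Prop :=
  (forall u, lin (t u)) /\ (forall v, lin (fun u => t u v)) /\
  forall (M : lmodType R) (b : U -> V -> M),
    (forall u, lin (b u)) -> (forall v, lin (fun u => b u v)) ->
    exists L : W -> M, lin L /\ (forall u v, L (t u v) = b u v) /\
      forall L' : W -> M, lin L' -> (forall u v, L' (t u v) = b u v) ->
        forall w, L' w = L w.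

Definition is_tensor3 (R : comPzRingType) (U1 U2 U3 W : lmodType R)
    (t : U1 -> U2 -> U3 -> W) : Prop :=
  (forall u2 u3, lin (fun u1 => t u1 u2 u3)) /\
  (forall u1 u3, lin (fun u2 => t u1 u2 u3)) /\
  (forall u1 u2, lin (t u1 u2)) /\
  forall (M : lmodType R) (b : U1 -> U2 -> U3 -> M),
    (forall u2 u3, lin (fun u1 => b u1 u2 u3)) ->
    (forall u1 u3, lin (fun u2 => b u1 u2 u3)) ->
    (forall u1 u2, lin (b u1 u2)) ->
    exists L : W -> M, lin L /\ (forall u1 u2 u3, L (t u1 u2 u3) = b u1 u2 u3) /\
      forall L' : W -> M, lin L' ->
        (forall u1 u2 u3, L' (t u1 u2 u3) = b u1 u2 u3) -> forall w, L' w = L w.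

Definition is_alg_tensor2 (R : comPzRingType) (A B C : comAlgType R)
    (t : A -> B -> C) : Prop :=
  is_tensor2 t /\ t 1 1 = 1 /\
  forall a b a' b', t a b * t a' b' = t (a * a') (b * b').

Definition is_alg_tensor3 (R : comPzRingType) (A1 A2 A3 C : comAlgType R)
    (t : A1 -> A2 -> A3 -> C) : Prop :=
  is_tensor3 t /\ t 1 1 1 = 1 /\
  forall a b c a' b' c', t a b c * t a' b' c' = t (a * a') (b * b') (c * c').

Definition is_alg_hom (R : comPzRingType) (A B : comAlgType R) (f : A -> B) : Prop :=
  lin f /\ f 1 = 1 /\ forall x y, f (x * y) = f x * f y.

Definition is_alg_char (R : comPzRingType) (A : comAlgType R) (f : A -> R) : Prop :=
  (forall (a : R) (x y : A), f (a *: x + y) = a * f x + f y) /\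
  f 1 = 1 /\ forall x y, f (x * y) = f x * f y.

Definition is_ERB (R : comPzRingType) (A : comAlgType R) (lam kap : R) (P : A -> A) : Prop :=
  lin P /\
  forall x y, P x * P y = P (x * P y) + P (P x * y) + lam *: P (x * y) + kap *: (x * y).

Definition is_ERB_hom (R : comPzRingType) (A B : comAlgType R)
    (P : A -> A) (Q : B -> B) (f : A -> B) : Prop :=
  is_alg_hom f /\ forall x, f (P x) = Q (f x).

Definition is_free_comm_ERB (R : comPzRingType) (lam kap : R) (A S : comAlgType R)
    (j : A -> S) (P : S -> S) : Prop :=
  is_alg_hom j /\ is_ERB lam kap P /\
  forall (B : comAlgType R) (Q : B -> B) (f : A -> B),
    is_ERB lam kap Q -> is_alg_hom f ->
    exists F : S -> B, is_ERB_hom P Q F /\ (forall a, F (j a) = f a) /\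
      forall G : S -> B, is_ERB_hom P Q G -> (forall a, G (j a) = f a) ->
        forall x, G x = F x.

(* The maps
   (eps (x) id), (id (x) eps), (id (x) Delta), (Delta (x) id) are the
   linear maps determined on pure tensors (quantified universally; they
   exist uniquely by the universal property of the tensor products). *)
Definition is_comm_bialg (R : comPzRingType) (A TA2 TA3 : comAlgType R)
    (tA2 : A -> A -> TA2) (tA3 : A -> A -> A -> TA3)
    (Delta : A -> TA2) (eps : A -> R) : Prop :=
  is_alg_tensor2 tA2 /\ is_alg_tensor3 tA3 /\
  is_alg_hom Delta /\ is_alg_char eps /\
  (forall L : TA2 -> A, lin L -> (forall x y, L (tA2 x y) = eps x *: y) ->
     forall x, L (Delta x) = x) /\
  (forall L : TA2 -> A, lin L -> (forall x y, L (tA2 x y) = eps y *: x) ->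
     forall x, L (Delta x) = x) /\
  (* coassociativity: (id (x) Delta) Delta = (Delta (x) id) Delta *)
  (forall (Lf : A -> TA2 -> TA3) (G : TA2 -> TA3)
          (Lb : A -> TA2 -> TA3) (H : TA2 -> TA3),
     (forall a, lin (Lf a)) -> (forall a b c, Lf a (tA2 b c) = tA3 a b c) ->
     lin G -> (forall a b, G (tA2 a b) = Lf a (Delta b)) ->
     (forall c, lin (Lb c)) -> (forall a b c, Lb c (tA2 a b) = tA3 a b c) ->
     lin H -> (forall a b, H (tA2 a b) = Lb b (Delta a)) ->
     forall x, G (Delta x) = H (Delta x)).

(* Main.v *)
Require Import Defs.
From HB Require Import structures.
From mathcomp Require Import all_boot all_algebra.
From mathcomp Require Import ring.
Set Implicit Arguments. Unset Strict Implicit. Unset Printing Implicit Defensive.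
Import GRing.Theory.
Local Open Scope ring_scope.

Lemma lin0 (k : comPzRingType) (U V : lmodType k) (f : U -> V) : lin f -> f 0 = 0.
Proof.
move=> Hf; have := Hf 1 0 0; rewrite !scale1r addr0 => /(congr1 (fun z => z - f 0)).
by rewrite addrK subrr => <-.
Qed.
Lemma linD (k : comPzRingType) (U V : lmodType k) (f : U -> V) : lin f ->
  forall x y, f (x + y) = f x + f y.
Proof. by move=> Hf x y; rewrite -[x]scale1r Hf !scale1r. Qed.
Lemma linZ (k : comPzRingType) (U V : lmodType k) (f : U -> V) : lin f ->
  forall a x, f (a *: x) = a *: f x.
Proof. by move=> Hf a x; rewrite -[a *: x]addr0 Hf (lin0 Hf) addr0. Qed.
Lemma linN (k : comPzRingType) (U V : lmodType k) (f : U -> V) : lin f ->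
  forall x, f (- x) = - f x.
Proof. by move=> Hf x; rewrite -scaleN1r (linZ Hf) scaleN1r. Qed.
Lemma linB (k : comPzRingType) (U V : lmodType k) (f : U -> V) : lin f ->
  forall x y, f (x - y) = f x - f y.
Proof. by move=> Hf x y; rewrite (linD Hf) (linN Hf). Qed.

Lemma scaleE (k : comPzRingType) (B : comAlgType k) (r : k) (x : B) :
  r *: x = in_alg B r * x.
Proof. by rewrite in_algE mulr_algl. Qed.

Lemma t2_ext (k : comPzRingType) (U V W : lmodType k) (t : U -> V -> W) :
  is_tensor2 t -> forall (M : lmodType k) (f g : W -> M), lin f -> lin g ->
  (forall u v, f (t u v) = g (t u v)) -> forall w, f w = g w.
Proof.
case=> [Hl [Hr Hu]] M f g Hf Hg Hfg w.
have B1 : forall u, lin (fun v => f (t u v)).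
  by move=> u a x y /=; rewrite (Hl u a x y) (linD Hf) (linZ Hf).
have B2 : forall v, lin (fun u => f (t u v)).
  by move=> v a x y /=; rewrite (Hr v a x y) (linD Hf) (linZ Hf).
have [L [_ [_ Huniq]]] := Hu M (fun u v => f (t u v)) B1 B2.
by rewrite (Huniq f Hf (fun _ _ => erefl)) (Huniq g Hg (fun u v => esym (Hfg u v))).
Qed.

Lemma t2_lift (k : comPzRingType) (U V W : lmodType k) (t : U -> V -> W) :
  is_tensor2 t -> forall (M : lmodType k) (b : U -> V -> M),
  (forall u, lin (b u)) -> (forall v, lin (fun u => b u v)) ->
  exists L : W -> M, lin L /\ forall u v, L (t u v) = b u v.
Proof.
case=> [Hl [Hr Hu]] M b H1 H2.
by have [L [HL [HLt _]]] := Hu M b H1 H2; exists L.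
Qed.

Lemma t3_ext (k : comPzRingType) (U1 U2 U3 W : lmodType k) (t : U1 -> U2 -> U3 -> W) :
  is_tensor3 t -> forall (M : lmodType k) (f g : W -> M), lin f -> lin g ->
  (forall u1 u2 u3, f (t u1 u2 u3) = g (t u1 u2 u3)) -> forall w, f w = g w.
Proof.
case=> [H1 [H2 [H3 Hu]]] M f g Hf Hg Hfg w.
have B1 : forall u2 u3, lin (fun u1 => f (t u1 u2 u3)).
  by move=> u2 u3 a x y /=; rewrite (H1 u2 u3 a x y) (linD Hf) (linZ Hf).
have B2 : forall u1 u3, lin (fun u2 => f (t u1 u2 u3)).
  by move=> u1 u3 a x y /=; rewrite (H2 u1 u3 a x y) (linD Hf) (linZ Hf).
have B3 : forall u1 u2, lin (fun u3 => f (t u1 u2 u3)).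
  by move=> u1 u2 a x y /=; rewrite (H3 u1 u2 a x y) (linD Hf) (linZ Hf).
have [L [_ [_ Huniq]]] := Hu M (fun u1 u2 u3 => f (t u1 u2 u3)) B1 B2 B3.
by rewrite (Huniq f Hf (fun _ _ _ => erefl))
     (Huniq g Hg (fun u1 u2 u3 => esym (Hfg u1 u2 u3))).
Qed.

Definition al3 (k : comPzRingType) (Sh T3 : comAlgType k) (t3 : Sh -> Sh -> Sh -> T3) x := t3 x 1 1.
Definition be3 (k : comPzRingType) (Sh T3 : comAlgType k) (t3 : Sh -> Sh -> Sh -> T3) x := t3 1 x 1.
Definition ga3 (k : comPzRingType) (Sh T3 : comAlgType k) (t3 : Sh -> Sh -> Sh -> T3) x := t3 1 1 x.

Lemma erb_pure (k : comPzRingType) (lam kap mu : k) (Hmu : mu ^+ 2 - lam * mu + kap = 0)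
  (Sh T3 : comAlgType k) (Pe : Sh -> Sh) (HPe : lin Pe)
  (HPeE : forall x y, Pe x * Pe y = Pe (x * Pe y) + Pe (Pe x * y) + lam *: Pe (x * y) + kap *: (x * y))
  (epse : Sh -> k) (eD : forall x y, epse (x + y) = epse x + epse y)
  (eZ : forall r x, epse (r *: x) = r * epse x) (eM : forall x y, epse (x * y) = epse x * epse y)
  (e1 : epse 1 = 1) (eP : forall x, epse (Pe x) = - mu * epse x)
  (t3 : Sh -> Sh -> Sh -> T3) (H3 : is_tensor3 t3)
  (H3mul : forall a b c a' b' c', t3 a b c * t3 a' b' c' = t3 (a * a') (b * b') (c * c'))
  (H3one : t3 1 1 1 = 1)
  (Pt : T3 -> T3) (HPt : lin Pt)
  (HPtt : forall a b c, Pt (t3 a b c) =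
      t3 (Pe a + mu *: a) (epse b *: 1) (epse c *: 1)
    + t3 a (Pe b + mu *: b) (epse c *: 1)
    + t3 a b (Pe c))
  a b c a' b' c' :
  let X := t3 a b c in let Y := t3 a' b' c' in
  Pt X * Pt Y = Pt (X * Pt Y) + Pt (Pt X * Y) + lam *: Pt (X * Y) + kap *: (X * Y).
Proof.
move: H3 => [H3a [H3b [H3c _]]].
have Lal : lin (al3 t3) by move=> r x y; exact: H3a.
have Lbe : lin (be3 t3) by move=> r x y; exact: H3b.
have Lga : lin (ga3 t3) by move=> r x y; exact: H3c.
have t3E u v w : t3 u v w = al3 t3 u * be3 t3 v * ga3 t3 w.
  by rewrite /al3 /be3 /ga3 !H3mul !mulr1 !mul1r.
have alM x y : al3 t3 (x * y) = al3 t3 x * al3 t3 y by rewrite /al3 H3mul mulr1.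
have beM x y : be3 t3 (x * y) = be3 t3 x * be3 t3 y by rewrite /be3 H3mul mulr1.
have gaM x y : ga3 t3 (x * y) = ga3 t3 x * ga3 t3 y by rewrite /ga3 H3mul mulr1.
have al1 : al3 t3 1 = 1 by [].
have be1 : be3 t3 1 = 1 by [].
have ga1 : ga3 t3 1 = 1 by [].
have HPeE' x y : Pe (x * Pe y) = Pe x * Pe y - kap *: (x * y) - lam *: Pe (x * y) - Pe (Pe x * y).
  by rewrite HPeE !addrK.
have Hk : kap = lam * mu - mu ^+ 2.
  have -> : kap = lam * mu - mu ^+ 2 + (mu ^+ 2 - lam * mu + kap) by ring.
  by rewrite Hmu addr0.
move=> X Y; rewrite /X /Y.
rewrite !HPtt !(mulrDr, mulrDl) !H3mul !(linD HPt) !HPtt.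
rewrite !(mulrDr, mulrDl, mulr1, mul1r, =^~scalerAl, =^~scalerAr).
rewrite !(linD HPe, linZ HPe) !(eD, eZ, eM, e1, eP) !HPeE'.
rewrite ?(linD HPe, linZ HPe, linB HPe).
rewrite !t3E !(linD Lal, linZ Lal, linB Lal, linD Lbe, linZ Lbe, linB Lbe,
  linD Lga, linZ Lga, linB Lga, linN Lal, linN Lbe, linN Lga, alM, beM, gaM, al1, be1, ga1).
rewrite !scaleE Hk.
ring.
Qed.

Lemma erb_linL (k : comPzRingType) (lam kap : k) (B : comAlgType k) (P : B -> B) (HP : lin P) y :
  lin (fun x => P x * P y) /\
  lin (fun x => P (x * P y) + P (P x * y) + lam *: P (x * y) + kap *: (x * y)).
Proof.
split=> r u v /=.
  by rewrite HP mulrDl -scalerAl.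
rewrite HP !mulrDl -!scalerAl !(linD HP, linZ HP) !scaleE; ring.
Qed.

Lemma erb_linR (k : comPzRingType) (lam kap : k) (B : comAlgType k) (P : B -> B) (HP : lin P) x :
  lin (fun y => P x * P y) /\
  lin (fun y => P (x * P y) + P (P x * y) + lam *: P (x * y) + kap *: (x * y)).
Proof.
split=> r u v /=.
  by rewrite HP mulrDr -scalerAr.
rewrite HP !mulrDr -!scalerAr !(linD HP, linZ HP) !scaleE; ring.
Qed.

Lemma erb_t3 (k : comPzRingType) (lam kap mu : k) (Hmu : mu ^+ 2 - lam * mu + kap = 0)
  (Sh T3 : comAlgType k) (Pe : Sh -> Sh) (HPe : lin Pe)
  (HPeE : forall x y, Pe x * Pe y = Pe (x * Pe y) + Pe (Pe x * y) + lam *: Pe (x * y) + kap *: (x * y))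
  (epse : Sh -> k) (eD : forall x y, epse (x + y) = epse x + epse y)
  (eZ : forall r x, epse (r *: x) = r * epse x) (eM : forall x y, epse (x * y) = epse x * epse y)
  (e1 : epse 1 = 1) (eP : forall x, epse (Pe x) = - mu * epse x)
  (t3 : Sh -> Sh -> Sh -> T3) (H3 : is_tensor3 t3)
  (H3mul : forall a b c a' b' c', t3 a b c * t3 a' b' c' = t3 (a * a') (b * b') (c * c'))
  (H3one : t3 1 1 1 = 1)
  (Pt : T3 -> T3) (HPt : lin Pt)
  (HPtt : forall a b c, Pt (t3 a b c) =
      t3 (Pe a + mu *: a) (epse b *: 1) (epse c *: 1)
    + t3 a (Pe b + mu *: b) (epse c *: 1)
    + t3 a b (Pe c)) :
  is_ERB lam kap Pt.
Proof.
split => // x y.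
have step1 : forall a' b' c' x, Pt x * Pt (t3 a' b' c') =
   Pt (x * Pt (t3 a' b' c')) + Pt (Pt x * t3 a' b' c') + lam *: Pt (x * t3 a' b' c')
   + kap *: (x * t3 a' b' c').
  move=> a' b' c' x'.
  have [L1 L2] := erb_linL lam kap HPt (t3 a' b' c').
  apply: (t3_ext H3 L1 L2) => a b c /=.
  exact: (erb_pure Hmu HPe HPeE eD eZ eM e1 eP H3 H3mul H3one HPt HPtt).
have [L1 L2] := erb_linR lam kap HPt x.
apply: (t3_ext H3 L1 L2) => a b c /=.
exact: step1.
Qed.

Lemma mult_ext2 (k : comPzRingType) (U V W C : comAlgType k) (t : U -> V -> W)
  (Ht : is_alg_tensor2 t) (F : W -> C) (HF : lin F)
  (Hpure : forall a b a' b', F (t a b * t a' b') = F (t a b) * F (t a' b')) :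
  forall x y, F (x * y) = F x * F y.
Proof.
move: Ht => [Ht _] x y.
have step : forall a b y, F (t a b * y) = F (t a b) * F y.
  move=> a b y'.
  have L1 : lin (fun y => F (t a b * y)).
    by move=> r u v /=; rewrite mulrDr -scalerAr HF.
  have L2 : lin (fun y => F (t a b) * F y).
    by move=> r u v /=; rewrite HF mulrDr -scalerAr.
  by apply: (t2_ext Ht L1 L2) => a' b' /=; exact: Hpure.
have L1 : lin (fun x => F (x * y)).
  by move=> r u v /=; rewrite mulrDl -scalerAl HF.
have L2 : lin (fun x => F x * F y).
  by move=> r u v /=; rewrite HF mulrDl -scalerAl.
by apply: (t2_ext Ht L1 L2) => a b /=; exact: step.
Qed.
Unset Implicit Arguments.
Set Strict Implicit.

Theorem lemma4p6
  (k : comPzRingType) (lam kap mu : k) (Hmu : mu ^+ 2 - lam * mu + kap = 0)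
  (* the commutative bialgebra A, with A(x)A = TA2 and A(x)A(x)A = TA3 *)
  (A TA2 TA3 : comAlgType k) (tA2 : A -> A -> TA2) (tA3 : A -> A -> A -> TA3)
  (DeltaA : A -> TA2) (epsA : A -> k)
  (HA : is_comm_bialg tA2 tA3 DeltaA epsA)
  (* the free commutative extended RB algebra (Sh, P_e, j_A) on A *)
  (Sh : comAlgType k) (Pe : Sh -> Sh) (jA : A -> Sh)
  (Hfree : is_free_comm_ERB lam kap jA Pe)
  (* Sh (x) Sh = T2 and Sh (x) Sh (x) Sh = T3, with componentwise product *)
  (T2 T3 : comAlgType k) (t2 : Sh -> Sh -> T2) (t3 : Sh -> Sh -> Sh -> T3)
  (HT2 : is_alg_tensor2 t2) (HT3 : is_alg_tensor3 t3)
  (* the counit eps_e *)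
  (epse : Sh -> k) (Hepse : is_alg_char epse)
  (Hepsej : forall a, epse (jA a) = epsA a)
  (HepseP : forall x, epse (Pe x) = - mu * epse x)
  (* jA (x) jA : A(x)A -> Sh(x)Sh *)
  (jj : TA2 -> T2) (Hjj : lin jj) (Hjjt : forall a b, jj (tA2 a b) = t2 (jA a) (jA b))
  (* the operator P-bar on Sh (x) Sh *)
  (Pbar : T2 -> T2) (HPbar : lin Pbar)
  (HPbart : forall a b, Pbar (t2 a b) =
      t2 (Pe a) (epse b *: 1) + mu *: t2 a (epse b *: 1) + t2 a (Pe b))
  (* the coproduct Delta_e *)
  (Deltae : Sh -> T2) (HDeltae : is_alg_hom Deltae)
  (HDeltaej : forall a, Deltae (jA a) = jj (DeltaA a))
  (HDeltaeP : forall x, Deltae (Pe x) = Pbar (Deltae x))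
  (* the operator P-tilde on Sh (x) Sh (x) Sh *)
  (Pt : T3 -> T3) (HPt : lin Pt)
  (HPtt : forall a b c, Pt (t3 a b c) =
      t3 (Pe a + mu *: a) (epse b *: 1) (epse c *: 1)
    + t3 a (Pe b + mu *: b) (epse c *: 1)
    + t3 a b (Pe c))
  (* id (x) Delta_e : Sh(x)Sh -> Sh(x)Sh(x)Sh, via a (x) (b (x) c) |-> a (x) b (x) c *)
  (Lf : Sh -> T2 -> T3) (HLf : forall a, lin (Lf a))
  (HLft : forall a b c, Lf a (t2 b c) = t3 a b c)
  (IdD : T2 -> T3) (HIdD : lin IdD) (HIdDt : forall a b, IdD (t2 a b) = Lf a (Deltae b))
  (* Delta_e (x) id : Sh(x)Sh -> Sh(x)Sh(x)Sh, via (a (x) b) (x) c |-> a (x) b (x) c *)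
  (Lb : Sh -> T2 -> T3) (HLb : forall c, lin (Lb c))
  (HLbt : forall a b c, Lb c (t2 a b) = t3 a b c)
  (DId : T2 -> T3) (HDId : lin DId) (HDIdt : forall a b, DId (t2 a b) = Lb b (Deltae a)) :
  is_ERB lam kap Pt /\
  is_ERB_hom Pe Pt (fun x => IdD (Deltae x)) /\
  is_ERB_hom Pe Pt (fun x => DId (Deltae x)).
Proof.
move: HT2 => [HT2t [H2one H2mul]].
move: HT3 => [HT3t [H3one H3mul]].
have [H3a [H3b [H3c _]]] := HT3t.
have [H2a [H2b _]] := HT2t.
move: Hfree => [Hj [[HPe HPeE] Huniv]].
move: HDeltae => [HDl [HD1 HDM]].
move: Hepse => [HeL [He1 HeM]].
have eD : forall x y, epse (x + y) = epse x + epse y.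
  by move=> x y; have := HeL 1 x y; rewrite scale1r mul1r.
have e0 : epse 0 = 0.
  have := eD 0 0; rewrite addr0 => /(congr1 (fun z => z - epse 0)).
  by rewrite addrK subrr => <-.
have eZ : forall r x, epse (r *: x) = r * epse x.
  by move=> r x; rewrite -[r *: x]addr0 HeL e0 addr0.
have Hk : kap = lam * mu - mu ^+ 2.
  have -> : kap = lam * mu - mu ^+ 2 + (mu ^+ 2 - lam * mu + kap) by ring.
  by rewrite Hmu addr0.
have HPt_ERB : is_ERB lam kap Pt.
  exact: (erb_t3 Hmu HPe HPeE eD eZ HeM He1 HepseP HT3t H3mul H3one HPt HPtt).
have Lal : lin (al3 t3) by move=> r x y; exact: H3a.
have Lbe : lin (be3 t3) by move=> r x y; exact: H3b.
have Lga : lin (ga3 t3) by move=> r x y; exact: H3c.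
have t3E u v w : t3 u v w = al3 t3 u * be3 t3 v * ga3 t3 w.
  by rewrite /al3 /be3 /ga3 !H3mul !mulr1 !mul1r.
have alM x y : al3 t3 (x * y) = al3 t3 x * al3 t3 y by rewrite /al3 H3mul mulr1.
have beM x y : be3 t3 (x * y) = be3 t3 x * be3 t3 y by rewrite /be3 H3mul mulr1.
have gaM x y : ga3 t3 (x * y) = ga3 t3 x * ga3 t3 y by rewrite /ga3 H3mul mulr1.
have al1 : al3 t3 1 = 1 by [].
have be1 : be3 t3 1 = 1 by [].
have ga1 : ga3 t3 1 = 1 by [].
have HD1' : Deltae 1 = t2 1 1 by rewrite HD1 H2one.
have [ee [Hee HeeT]] : exists ee : T2 -> Sh, lin ee /\
    forall x y, ee (t2 x y) = (epse x * epse y) *: 1.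
  apply: (t2_lift HT2t).
  - by move=> u r x y /=; rewrite eD eZ !scaleE; ring.
  - by move=> v r x y /=; rewrite eD eZ !scaleE; ring.
have eeM : forall x y, ee (x * y) = ee x * ee y.
  apply: (mult_ext2 (conj HT2t (conj H2one H2mul)) Hee) => a b a' b'.
  by rewrite H2mul !HeeT !HeM !scaleE; ring.
have ee1 : ee 1 = 1 by rewrite -H2one HeeT He1 mulr1 scale1r.
have eePbar : forall u, ee (Pbar u) = - mu *: ee u.
  have L1 : lin (fun u => ee (Pbar u)) by move=> r x y /=; rewrite HPbar Hee.
  have L2 : lin (fun u => - mu *: ee u).
    by move=> r x y /=; rewrite Hee scalerDr !scalerA mulrC.
  apply: (t2_ext HT2t L1 L2) => a b /=.
  rewrite HPbart !(linD Hee, linZ Hee) !HeeT !HepseP !eZ He1 !scaleE; ring.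
have HA' := HA.
move: HA' => [HtA2 [HtA3 [HDA [HepsA [Hcl [Hcr Hcoass]]]]]].
move: HepsA => [HaL [Ha1 HaM]].
have aD : forall x y, epsA (x + y) = epsA x + epsA y.
  by move=> x y; have := HaL 1 x y; rewrite scale1r mul1r.
have a0 : epsA 0 = 0.
  have := aD 0 0; rewrite addr0 => /(congr1 (fun z => z - epsA 0)).
  by rewrite addrK subrr => <-.
have aZ : forall r x, epsA (r *: x) = r * epsA x.
  by move=> r x; rewrite -[r *: x]addr0 HaL a0 addr0.
have [LA [HLA HLAt]] : exists L : TA2 -> A, lin L /\ forall x y, L (tA2 x y) = epsA x *: y.
  apply: (t2_lift (proj1 HtA2)).
  - by move=> u r x y /=; rewrite scalerDr !scalerA mulrC.
  - by move=> v r x y /=; rewrite HaL scalerDl scalerA.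
have HLAD := Hcl LA HLA HLAt.
have eejj : forall a, ee (jj (DeltaA a)) = epsA a *: 1.
  move=> a.
  have L1 : lin (fun u => ee (jj u)) by move=> r x y /=; rewrite Hjj Hee.
  have L2 : lin (fun u => epsA (LA u) *: (1 : Sh)).
    by move=> r x y /=; rewrite HLA aD aZ scalerDl scalerA.
  rewrite (t2_ext (proj1 HtA2) L1 L2) /=; first by rewrite HLAD.
  by move=> x y; rewrite Hjjt HeeT HLAt aZ !Hepsej.
have Hcounit : forall x, ee (Deltae x) = epse x *: 1.
  pose Q := fun x : Sh => - mu *: x.
  have HQ : is_ERB lam kap Q.
    split.
      by move=> r x y; rewrite /Q scalerDr !scalerA mulrC.
    by move=> x y; rewrite /Q !scaleE Hk; ring.
  have Hf : is_alg_hom (fun a => epsA a *: (1 : Sh)).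
    split; first by move=> r x y; rewrite HaL scalerDl scalerA.
    split; first by rewrite Ha1 scale1r.
    by move=> x y; rewrite HaM !scaleE; ring.
  have [F [_ [_ HFu]]] := Huniv Sh Q _ HQ Hf.
  move=> x.
  rewrite (HFu (fun x => ee (Deltae x))) ?(HFu (fun x => epse x *: 1)) //.
  - split; last by move=> y; rewrite /Q HepseP scalerA.
    split; first by move=> r y z; rewrite HeL scalerDl scalerA.
    split; first by rewrite He1 scale1r.
    by move=> y z; rewrite HeM !scaleE; ring.
  - by move=> a; rewrite Hepsej.
  - split; last by move=> y; rewrite /Q HDeltaeP eePbar.
    split; first by move=> r y z; rewrite HDl Hee.
    split; first by rewrite HD1 ee1.
    by move=> y z; rewrite HDM eeM.
  - by move=> a; rewrite HDeltaej eejj.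
have HT2' : is_alg_tensor2 t2 by split=> //; split.
have LfM : forall a a' u u', Lf a u * Lf a' u' = Lf (a * a') (u * u').
  move=> a a' u u'.
  have step : forall b c u', Lf a (t2 b c) * Lf a' u' = Lf (a * a') (t2 b c * u').
    move=> b c u0.
    have L1 : lin (fun v => Lf a (t2 b c) * Lf a' v).
      by move=> r x y /=; rewrite HLf mulrDr -scalerAr.
    have L2 : lin (fun v => Lf (a * a') (t2 b c * v)).
      by move=> r x y /=; rewrite mulrDr -scalerAr HLf.
    by apply: (t2_ext HT2t L1 L2) => b' c' /=; rewrite H2mul !HLft H3mul.
  have L1 : lin (fun v => Lf a v * Lf a' u').
    by move=> r x y /=; rewrite HLf mulrDl -scalerAl.
  have L2 : lin (fun v => Lf (a * a') (v * u')).
    by move=> r x y /=; rewrite mulrDl -scalerAl HLf.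
  by apply: (t2_ext HT2t L1 L2) => b c /=; exact: step.
have LbM : forall c c' u u', Lb c u * Lb c' u' = Lb (c * c') (u * u').
  move=> c c' u u'.
  have step : forall a b u', Lb c (t2 a b) * Lb c' u' = Lb (c * c') (t2 a b * u').
    move=> a b u0.
    have L1 : lin (fun v => Lb c (t2 a b) * Lb c' v).
      by move=> r x y /=; rewrite HLb mulrDr -scalerAr.
    have L2 : lin (fun v => Lb (c * c') (t2 a b * v)).
      by move=> r x y /=; rewrite mulrDr -scalerAr HLb.
    by apply: (t2_ext HT2t L1 L2) => a' b' /=; rewrite H2mul !HLbt H3mul.
  have L1 : lin (fun v => Lb c v * Lb c' u').
    by move=> r x y /=; rewrite HLb mulrDl -scalerAl.
  have L2 : lin (fun v => Lb (c * c') (v * u')).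
    by move=> r x y /=; rewrite mulrDl -scalerAl HLb.
  by apply: (t2_ext HT2t L1 L2) => a b /=; exact: step.
have IdDM : forall x y, IdD (x * y) = IdD x * IdD y.
  apply: (mult_ext2 HT2' HIdD) => a b a' b'.
  by rewrite H2mul !HIdDt HDM LfM.
have DIdM : forall x y, DId (x * y) = DId x * DId y.
  apply: (mult_ext2 HT2' HDId) => a b a' b'.
  by rewrite H2mul !HDIdt HDM LbM.
have DE : forall b, Deltae (epse b *: 1) = epse b *: t2 1 1.
  by move=> b; rewrite (linZ HDl) HD1'.
have C1 : forall a u, Pt (Lf a u) = Lf a (Pbar u) + t3 (Pe a + mu *: a) (ee u) 1.
  move=> a.
  have L1 : lin (fun u => Pt (Lf a u)) by move=> r x y /=; rewrite HLf HPt.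
  have L2 : lin (fun u => Lf a (Pbar u) + t3 (Pe a + mu *: a) (ee u) 1).
    move=> r x y /=; rewrite HPbar HLf Hee (H3b _ 1 r (ee x) (ee y)) /=.
    rewrite !scaleE; ring.
  apply: (t2_ext HT2t L1 L2) => b c /=.
  rewrite HLft HPtt HeeT HPbart !(linD (HLf a), linZ (HLf a)) !HLft.
  rewrite !t3E !(linD Lal, linZ Lal, linD Lbe, linZ Lbe, linD Lga, linZ Lga,
     al1, be1, ga1) !scaleE; ring.
have C3 : forall b u, Pt (Lb b u) =
    Lb (epse b *: 1) (Pbar u) + mu *: Lb (epse b *: 1) u + Lb (Pe b) u.
  move=> b.
  have L1 : lin (fun u => Pt (Lb b u)) by move=> r x y /=; rewrite HLb HPt.
  have L2 : lin (fun u => Lb (epse b *: 1) (Pbar u) + mu *: Lb (epse b *: 1) u + Lb (Pe b) u).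
    move=> r x y /=; rewrite HPbar !HLb !scaleE; ring.
  apply: (t2_ext HT2t L1 L2) => a1 a2 /=.
  rewrite HLbt HPtt HPbart !(linD (HLb _), linZ (HLb _)) !HLbt.
  rewrite !t3E !(linD Lal, linZ Lal, linD Lbe, linZ Lbe, linD Lga, linZ Lga,
     al1, be1, ga1) !scaleE; ring.
have IdDP : forall u, IdD (Pbar u) = Pt (IdD u).
  have L1 : lin (fun u => IdD (Pbar u)) by move=> r x y /=; rewrite HPbar HIdD.
  have L2 : lin (fun u => Pt (IdD u)) by move=> r x y /=; rewrite HIdD HPt.
  apply: (t2_ext HT2t L1 L2) => a b /=.
  rewrite HIdDt C1 Hcounit HPbart !(linD HIdD, linZ HIdD) !HIdDt !DE HDeltaeP.
  rewrite !(linZ (HLf _)) !HLft.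
  rewrite !t3E !(linD Lal, linZ Lal, linD Lbe, linZ Lbe, linD Lga, linZ Lga,
     al1, be1, ga1) !scaleE; ring.
have DIdP : forall u, DId (Pbar u) = Pt (DId u).
  have L1 : lin (fun u => DId (Pbar u)) by move=> r x y /=; rewrite HPbar HDId.
  have L2 : lin (fun u => Pt (DId u)) by move=> r x y /=; rewrite HDId HPt.
  apply: (t2_ext HT2t L1 L2) => a b /=.
  rewrite HDIdt C3 HPbart !(linD HDId, linZ HDId) !HDIdt HDeltaeP.
  by rewrite !scaleE; ring.
split; first exact: HPt_ERB.
split.
- split; last by move=> x /=; rewrite HDeltaeP IdDP.
  split; first by move=> r x y /=; rewrite HDl HIdD.
  split; first by rewrite HD1' HIdDt HD1' HLft H3one.
  by move=> x y /=; rewrite HDM IdDM.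
- split; last by move=> x /=; rewrite HDeltaeP DIdP.
  split; first by move=> r x y /=; rewrite HDl HDId.
  split; first by rewrite HD1' HDIdt HD1' HLbt H3one.
  by move=> x y /=; rewrite HDM DIdM.
Qed.
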